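(* Let $r,m,s$ be positive integers with $\gcd(r,2^{3m}-1)=1$, and let $a,b\in\mathbb{F}_{2^{3m}}^*$. Put $A=a^{2^{2m}+2^m+1}+1$ and $B=a^{2^{2m}}b^{2^m}+a^{2^{2m}+2^m}b+b^{2^{2m}}$. Then the polynomial \[ f(x)=x^r\left(x^{2^m(2^m-1)}+ax^{2^m-1}+b\right)^{s(2^{2m}+2^m+1)} \] is a permutation polynomial of $\mathbb{F}_{2^{3m}}$ in each of the following two cases: (i) $A\neq 0$ and $(B/A)^{2^{2m}+2^m+1}\neq 1$; (ii) $A=0$ and $B\neq 0$.
   Context: A polynomial is a permutation polynomial of a finite field if it induces a bijection of that field. *)

(* Defs.v *)
From HB Require Import structures.
From mathcomp Require Import all_boot all_order all_algebra all_field.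
Set Implicit Arguments. Unset Strict Implicit. Unset Printing Implicit Defensive.
Import GRing.Theory.
Local Open Scope ring_scope.

Definition is_perm_poly (F : finFieldType) (p : {poly F}) : Prop :=
  bijective (fun x : F => p.[x]).

(* Main.v *)
Require Import Defs.
From HB Require Import structures.
From mathcomp Require Import all_boot all_order all_algebra all_field.
From mathcomp Require Import ring zify.
Import GRing.Theory.
Local Open Scope ring_scope.

Lemma frob2 (F : fieldType) (h2: 2 \in [pchar F]) m (u v : F) :
  (u+v)^+(2^m) = u^+(2^m) + v^+(2^m).
Proof.
elim: m => [|m IH]; first by rewrite !expr1.
by rewrite expnSr !exprM IH sqrrD (mulrn_pchar h2) addr0.
Qed.

Lemma keyl (F : finFieldType) m (hF : #|F| = (2^(3 * m))%N) (h2 : 2 \in [pchar F]) (a b y : F) :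
  y ^+ (2^m) + a * y + b = 0 ->
  (a ^+ (2 ^ (2 * m) + 2 ^ m + 1) + 1) * y =
   a ^+ (2 ^ (2 * m)) * b ^+ (2 ^ m) + a ^+ (2 ^ (2 * m) + 2 ^ m) * b + b ^+ (2 ^ (2 * m)).
Proof.
move=> h.
have e2 : (2^(2 * m) = 2^m*2^m)%N by rewrite -expnD addnn -mul2n.
have e3 : (2^(3 * m) = 2^m*2^m*2^m)%N by rewrite -!expnD; congr (expn 2); lia.
set q := (2^m)%N in e2 e3 h *.
have hy : y ^+ q = a * y + b.
  by rewrite -[RHS](oppr_pchar2 h2); apply/eqP; rewrite -addr_eq0 addrA h.
have fM : forall u v : F, (u * v)^+q = u^+q * v^+q by move=> u v; rewrite exprMn.
have fD : forall u v : F, (u + v)^+q = u^+q + v^+q by move=> u v; exact: frob2.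
have hy2 : y ^+ (q*q) = a^+q * (a*y+b) + b^+q by rewrite exprM hy fD fM hy.
have hyy : y = a^+(q*q) * (a^+q*(a*y+b) + b^+q) + b^+(q*q).
  by rewrite -{1}(expf_card y) hF e3 exprM hy2 fD fM fD fM hy -!exprM.
rewrite e2 !exprD !expr1 mulrDl mul1r {2}hyy.
have -> : forall P Q X Y : F,
   P * Q * a * y + (P * (Q * (a * y + b) + X) + Y) = (P*Q*a*y)*+2 + (P*X + P*Q*b + Y).
  by move=> *; ring.
by rewrite (mulrn_pchar h2) add0r.
Qed.

Theorem proposition9 (F : finFieldType) (r m s : nat)
  (hr : (0 < r)%N) (hm : (0 < m)%N) (hs : (0 < s)%N)
  (hF : #|F| = (2 ^ (3 * m))%N)
  (hgcd : coprime r (2 ^ (3 * m) - 1))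
  (a b : F) (ha : a != 0) (hb : b != 0) :
  let A := a ^+ (2 ^ (2 * m) + 2 ^ m + 1) + 1 in
  let B := a ^+ (2 ^ (2 * m)) * b ^+ (2 ^ m)
           + a ^+ (2 ^ (2 * m) + 2 ^ m) * b + b ^+ (2 ^ (2 * m)) in
  let f : {poly F} :=
    'X^r * ('X^(2 ^ m * (2 ^ m - 1)) + a *: 'X^(2 ^ m - 1) + b%:P)
             ^+ (s * (2 ^ (2 * m) + 2 ^ m + 1)) in
  ((A != 0 /\ (B / A) ^+ (2 ^ (2 * m) + 2 ^ m + 1) != 1) \/ (A = 0 /\ B != 0)) ->
  is_perm_poly f.
Proof.
move=> A B f hcase.
have h2 : 2 \in [pchar F] by apply: (card_finPcharP hF).
have hq0 : (0 < 2 ^ m)%N by rewrite expn_gt0.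
set n := (2 ^ (3 * m) - 1)%N in hgcd.
have hn : ((2 ^ m - 1) * (2 ^ (2 * m) + 2 ^ m + 1) = n)%N.
  have e2 : (2^(2 * m) = 2^m*2^m)%N by rewrite -expnD addnn -mul2n.
  have e3 : (2^(3 * m) = 2^m*2^m*2^m)%N by rewrite -!expnD; congr (expn 2); lia.
  rewrite /n e2 e3; move: hq0; set q := (2 ^ m)%N; nia.
have xn1 : forall x : F, x != 0 -> x ^+ n = 1.
  move=> x hx; apply: (mulfI hx); rewrite mulr1 -exprS /n subn1 prednK ?expn_gt0 //.
  by rewrite -hF expf_card.
have [km kn hk _] := egcdnP n hr.
rewrite (eqP hgcd) in hk.
have rinj : forall u v : F, u ^+ r = v ^+ r -> u = v.
  have pid : forall u : F, u ^+ (km * r) = u.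
    move=> u; rewrite hk exprD expr1; have [->|hu] := eqVneq u 0; first by rewrite mulr0.
    by rewrite mulnC exprM xn1 // expr1n mul1r.
  by move=> u v E; rewrite -(pid u) -(pid v) mulnC !exprM E.
pose h (y : F) := y ^+ (2 ^ m) + a * y + b.
have hnz : forall x : F, x != 0 -> h (x ^+ (2 ^ m - 1)) != 0.
  move=> x hx; apply/eqP => /(@keyl F m hF h2 a b) hAB.
  have yN : (x ^+ (2 ^ m - 1)) ^+ (2 ^ (2 * m) + 2 ^ m + 1) = 1 by rewrite -exprM hn xn1.
  case: hcase => [[hA hBA] | [hA hB]].
    by move: hBA; rewrite /B -hAB -/A [A * _]mulrC mulfK // yN eqxx.
  by move: hB; rewrite /B -hAB -/A hA mul0r eqxx.
have fE : forall x, f.[x] = x ^+ r * (h (x ^+ (2 ^ m - 1))) ^+ (s * (2 ^ (2 * m) + 2 ^ m + 1)).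
  move=> x; rewrite /f /h !hornerE -exprM mulnC exprM //.
have f0 : forall x, (f.[x] == 0) = (x == 0).
  move=> x; rewrite fE mulf_eq0 !expf_eq0 hr /=.
  have [->|hx] := eqVneq x 0; first by [].
  by rewrite (negPf (hnz x hx)) andbF.
have fq : forall x, x != 0 -> f.[x] ^+ (2 ^ m - 1) = (x ^+ (2 ^ m - 1)) ^+ r.
  move=> x hx; rewrite fE exprMn -!exprM.
  have -> : (s * (2 ^ (2 * m) + 2 ^ m + 1) * (2 ^ m - 1) = n * s)%N by rewrite -hn; nia.
  by rewrite (exprM (h _) n s) xn1 ?hnz // expr1n mulr1 mulnC.
apply: injF_bij => x z /= E.
have [hx0|hx] := eqVneq x 0.
  by subst x; apply/esym/eqP; rewrite -f0 -E f0.
have [hz0|hz] := eqVneq z 0.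
  by subst z; apply/eqP; rewrite -f0 E f0.
have Y : x ^+ (2 ^ m - 1) = z ^+ (2 ^ m - 1) by apply: rinj; rewrite -!fq // E.
apply: rinj; apply: (mulIf (expf_neq0 (s * (2 ^ (2 * m) + 2 ^ m + 1)) (hnz x hx))).
by rewrite -fE E fE Y.
Qed.
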